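(* Let $(p(i),x(i))_{i\in\mathbb{Z}}$ be real sequences satisfying, for all $i\in\mathbb{Z}$, $$p(i+1)=p(i)-\operatorname{sgn}x(i),\qquad x(i+1)=x(i)+p(i)-\operatorname{sgn}x(i).$$ (1) If $x(K)=0$ for some $K\in\mathbb{Z}$, then $x(K-n)+x(K+n)=0$ for every integer $n\ge 1$. (2) Consequently, if $x(0)=x(K)=0$ for some integer $K\ge 1$, then $x(i+2K)=x(i)$ for all $i\in\mathbb{Z}$.
   Context: Here $\operatorname{sgn}(x)=x/|x|$ for $x\neq 0$ and $\operatorname{sgn}(0)=0$. The recursion is invertible, so a sequence on $\mathbb{Z}$ is determined by its value at any single index; equivalently the $x(i)$ satisfy $-x(i-1)+2x(i)-x(i+1)=\operatorname{sgn}x(i)$ for all $i$. *)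

(* Defs.v *)
From Stdlib Require Import Reals ZArith.
Open Scope R_scope.

Definition sgn (x : R) : R :=
  if Req_EM_T x 0 then 0 else x / Rabs x.

Definition is_orbit (p x : Z -> R) : Prop :=
  forall i : Z,
    p (i + 1)%Z = p i - sgn (x i) /\
    x (i + 1)%Z = x i + p i - sgn (x i).

(* Main.v *)
Require Import Defs.
From Stdlib Require Import Reals ZArith Lra Lia.
Open Scope R_scope.

Lemma sgn_odd (a b : R) : a + b = 0 -> sgn a + sgn b = 0.
Proof.
  intro H. assert (b = - a) by lra. subst b. unfold sgn.
  destruct (Req_EM_T a 0); destruct (Req_EM_T (-a) 0); try lra.
  rewrite Rabs_Ropp. assert (Rabs a <> 0) by (apply Rabs_no_R0; auto).
  field; auto.
Qed.

Lemma rec2 p x : is_orbit p x -> forall i : Z,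
  x (i + 1)%Z = 2 * x i - x (i - 1)%Z - sgn (x i).
Proof.
  intros H i. destruct (H i) as [_ H2]. destruct (H (i - 1)%Z) as [H3 H4].
  replace (i - 1 + 1)%Z with i in H3, H4 by lia. lra.
Qed.

Lemma sym_nat p x K : is_orbit p x -> x K = 0 -> forall n : nat,
  x (K - Z.of_nat n)%Z + x (K + Z.of_nat n)%Z = 0 /\
  x (K - Z.of_nat (S n))%Z + x (K + Z.of_nat (S n))%Z = 0.
Proof.
  intros H HK n. induction n as [|n [IH1 IH2]].
  - simpl. replace (K - 0)%Z with K by lia. replace (K + 0)%Z with K by lia.
    split; [lra|]. pose proof (rec2 p x H K) as E.
    replace (K - Z.pos 1)%Z with (K - 1)%Z by lia.
    replace (K + Z.pos 1)%Z with (K + 1)%Z by lia.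
    rewrite E, HK. unfold sgn. destruct (Req_EM_T 0 0); lra.
  - split; [exact IH2|].
    set (m := Z.of_nat (S n)).
    pose proof (rec2 p x H (K + m)%Z) as E1.
    replace (K + m + 1)%Z with (K + Z.of_nat (S (S n)))%Z in E1 by (unfold m; lia).
    replace (K + m - 1)%Z with (K + Z.of_nat n)%Z in E1 by (unfold m; lia).
    pose proof (sgn_odd _ _ IH2) as Sg. fold m in IH2, Sg.
    pose proof (rec2 p x H (K - m)%Z) as E3.
    replace (K - m + 1)%Z with (K - Z.of_nat n)%Z in E3 by (unfold m; lia).
    replace (K - m - 1)%Z with (K - Z.of_nat (S (S n)))%Z in E3 by (unfold m; lia).
    lra.
Qed.

Lemma sym_Z p x K : is_orbit p x -> x K = 0 -> forall n : Z,
  x (K - n)%Z + x (K + n)%Z = 0.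
Proof.
  intros H HK n. destruct (Z_le_gt_dec 0 n).
  - destruct (sym_nat p x K H HK (Z.to_nat n)) as [A _].
    rewrite Z2Nat.id in A by lia. exact A.
  - destruct (sym_nat p x K H HK (Z.to_nat (- n))) as [A _].
    rewrite Z2Nat.id in A by lia.
    replace (K - - n)%Z with (K + n)%Z in A by lia.
    replace (K + - n)%Z with (K - n)%Z in A by lia. lra.
Qed.

Theorem mainTheorem2 :
  (forall (p x : Z -> R) (K : Z), is_orbit p x -> x K = 0 ->
     forall n : Z, (1 <= n)%Z -> x (K - n)%Z + x (K + n)%Z = 0) /\
  (forall (p x : Z -> R) (K : Z), is_orbit p x -> (1 <= K)%Z ->
     x 0%Z = 0 -> x K = 0 ->
     forall i : Z, x (i + 2 * K)%Z = x i).
Proof.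
  split.
  - intros p x K H HK n _. exact (sym_Z p x K H HK n).
  - intros p x K H _ H0 HK i.
    pose proof (sym_Z p x K H HK (i + K)%Z) as A.
    pose proof (sym_Z p x 0%Z H H0 i) as B.
    replace (K + (i + K))%Z with (i + 2 * K)%Z in A by lia.
    replace (K - (i + K))%Z with (0 - i)%Z in A by lia.
    replace (0 + i)%Z with i in B by lia. lra.
Qed.
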